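(* Let $\Phi=(A;A^*;\{E_i\}_{i=0}^d;\{E^*_i\}_{i=0}^d)$ be a Leonard system in $\mathcal A$ with eigenvalue sequence $\theta_0,\dots,\theta_d$, and let $p_i$, $x_i$, $m_i$ be as defined below. Then $$\sum_{r=0}^d p_i(\theta_r)p_j(\theta_r)m_r=\delta_{ij}\,x_1x_2\cdots x_i\qquad(0\le i,j\le d),$$ $$\sum_{i=0}^d\frac{p_i(\theta_r)p_i(\theta_s)}{x_1x_2\cdots x_i}=\delta_{rs}\,m_r^{-1}\qquad(0\le r,s\le d).$$
   Context: Let $\mathbb K$ be a field, $d\ge 0$ an integer, and $\mathcal A$ a $\mathbb K$-algebra isomorphic to the full matrix algebra $\mathrm{Mat}_{d+1}(\mathbb K)$; $I$ is its identity. An element of $\mathcal A$ is multiplicity-free if it has $d+1$ mutually distinct eigenvalues in $\mathbb K$. If $A$ is multiplicity-free with eigenvalues $\theta_0,\dots,\theta_d$, the primitive idempotent of $A$ associated with $\theta_i$ is $E_i=\prod_{j\ne i}(A-\theta_jI)/(\theta_i-\theta_j)$. A Leonard system in $\mathcal A$ is a sequence $\Phi=(A;A^*;\{E_i\}_{i=0}^d;\{E^*_i\}_{i=0}^d)$ such that (i) $A,A^*\in\mathcal A$ are multiplicity-free; (ii) $E_0,\dots,E_d$ is an ordering of the primitive idempotents of $A$; (iii) $E^*_0,\dots,E^*_d$ is an ordering of the primitive idempotents of $A^*$; (iv) $E_iA^*E_j=0$ if $|i-j|>1$ and $E_iA^*E_j\ne0$ if $|i-j|=1$ ($0\le i,j\le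 d$); (v) $E^*_iAE^*_j=0$ if $|i-j|>1$ and $E^*_iAE^*_j\ne0$ if $|i-j|=1$ ($0\le i,j\le d$). Here $A^*$ is merely notation (not an adjoint). $\theta_i$ is the eigenvalue of $A$ associated with $E_i$. Define $a_i=\mathrm{tr}(E^*_iA)$ ($0\le i\le d$), $x_i=\mathrm{tr}(E^*_iAE^*_{i-1}A)$ ($1\le i\le d$), $x_0=0$; polynomials $p_{-1}=0$, $p_0=1$, $\lambda p_i=p_{i+1}+a_ip_i+x_ip_{i-1}$ ($0\le i\le d$); and $m_i=\mathrm{tr}(E_iE^*_0)$ ($0\le i\le d$). Empty products equal $1$. *)

(* Defs.v *)
From HB Require Import structures.
From mathcomp Require Import all_boot all_order all_algebra.
Set Implicit Arguments. Unset Strict Implicit. Unset Printing Implicit Defensive.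
Import GRing.Theory.
Local Open Scope ring_scope.

Section LS.
Variables (K : fieldType) (d : nat).
Local Notation M := 'M[K]_d.+1.

Definition mult_free (A : M) : Prop :=
  exists th : 'I_d.+1 -> K, injective th /\ forall i, eigenvalue A (th i).

Definition prim_idem (A : M) (th : 'I_d.+1 -> K) (i : 'I_d.+1) : M :=
  \prod_(j < d.+1 | j != i) ((th i - th j)^-1 *: (A - (th j)%:M)).

Definition idem_ordering (A : M) (E : 'I_d.+1 -> M) : Prop :=
  exists th : 'I_d.+1 -> K, [/\ injective th, forall i, eigenvalue A (th i)
                           & forall i, E i = prim_idem A th i].

Definition far (i j : 'I_d.+1) : bool := (i.+1 < j)%N || (j.+1 < i)%N.
Definition adj (i j : 'I_d.+1) : bool := (i.+1 == j :> nat) || (j.+1 == i :> nat).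

Definition leonard_system (A As : M) (E Es : 'I_d.+1 -> M) : Prop :=
  (mult_free A /\ mult_free As /\ idem_ordering A E /\ idem_ordering As Es /\
  (forall i j, far i j -> E i *m As *m E j = 0) /\
  (forall i j, adj i j -> E i *m As *m E j != 0) /\
  (forall i j, far i j -> Es i *m A *m Es j = 0) /\
  (forall i j, adj i j -> Es i *m A *m Es j != 0))%type.

Definition ls_a (A : M) (Es : 'I_d.+1 -> M) (i : nat) : K :=
  \tr (Es (inord i) *m A).

Definition ls_x (A : M) (Es : 'I_d.+1 -> M) (i : nat) : K :=
  if i is k.+1 then \tr (Es (inord i) *m A *m Es (inord k) *m A) else 0.

(* ls_ppair n = (p_{n-1}, p_n), with p_{-1} = 0, p_0 = 1,
   p_{i+1} = (X - a_i) p_i - x_i p_{i-1}. *)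
Fixpoint ls_ppair (A : M) (Es : 'I_d.+1 -> M) (n : nat) : {poly K} * {poly K} :=
  match n with
  | 0 => (0, 1)
  | k.+1 => let qr := ls_ppair A Es k in
            (qr.2, ('X - (ls_a A Es k)%:P) * qr.2 - (ls_x A Es k)%:P * qr.1)
  end.

Definition ls_p (A : M) (Es : 'I_d.+1 -> M) (n : nat) : {poly K} :=
  (ls_ppair A Es n).2.

Definition ls_m (E Es : 'I_d.+1 -> M) (i : 'I_d.+1) : K :=
  \tr (E i *m Es ord0).

End LS.

(* Main.v *)
Require Import Defs.
From HB Require Import structures.
From mathcomp Require Import all_boot all_order all_algebra.
Set Implicit Arguments. Unset Strict Implicit. Unset Printing Implicit Defensive.
Import GRing.Theory.
Local Open Scope ring_scope.
Section Idem.
Variables (K : fieldType) (d : nat) (A : 'M[K]_d.+1) (th : 'I_d.+1 -> K).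
Hypotheses (thI : injective th) (thE : forall i, eigenvalue A (th i)).

Definition lag i : {poly K} :=
  \prod_(j < d.+1 | j != i) ((th i - th j)^-1 *: ('X - (th j)%:P)).
Definition Qp : {poly K} := \prod_(j < d.+1) ('X - (th j)%:P).

Lemma horner_lag i : horner_mx A (lag i) =
  \prod_(j < d.+1 | j != i) ((th i - th j)^-1 *: (A - (th j)%:M)).
Proof.
rewrite /lag (big_morph (horner_mx A) (rmorphM _) (rmorph1 _)); apply: eq_bigr => j _.
by rewrite horner_mxZ rmorphB /= horner_mx_X horner_mx_C.
Qed.

Lemma hornerQ : horner_mx A Qp = 0.
Proof.
have rts : all (root (char_poly A)) (map th (enum 'I_d.+1)).
  by apply/allP => x /mapP [j _ ->]; rewrite -eigenvalue_root_char.
have un : uniq_roots (map th (enum 'I_d.+1)).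
  by rewrite uniq_rootsE map_inj_uniq ?enum_uniq.
have [q Hq] := uniq_roots_prod_XsubC rts un.
rewrite big_map big_enum /= in Hq.
have HQ : \prod_(i in 'I_d.+1) ('X - (th i)%:P) = Qp by [].
rewrite HQ in Hq.
have sQ : size Qp = d.+2.
  by rewrite /Qp -big_enum /= size_prod_XsubC size_enum_ord.
have q0 : q != 0.
  apply/eqP => q0; move: (size_char_poly A); rewrite Hq q0 mul0r size_poly0 //.
have Q0 : Qp != 0 by rewrite -size_poly_eq0 sQ.
have : size q == 1%N.
  move: (size_char_poly A); rewrite Hq size_mul // sQ.
  rewrite addnS /= => h; apply/eqP; change (size q = 1%N); move: h; by move: (size q) => k h; apply/eqP; rewrite -(eqn_add2r d.+1) h.
move/size_poly1P => [c c0 qc].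
have := Cayley_Hamilton A; rewrite Hq qc rmorphM /= horner_mx_C.
by rewrite -mulmxE mul_scalar_mx => /eqP; rewrite scaler_eq0 (negbTE c0) /= => /eqP.
Qed.


Lemma thB0 i j : i != j -> th i - th j != 0.
Proof. by move=> ij; rewrite subr_eq0; apply: contra ij => /eqP/thI ->. Qed.

Lemma lag_th i k : (lag i).[th k] = (i == k)%:R.
Proof.
rewrite /lag horner_prod; case: (eqVneq i k) => [<-|ik].
  by rewrite big1 // => j ji; rewrite hornerZ hornerXsubC mulVf // thB0 // eq_sym.
rewrite (bigD1 k) /=; last by rewrite eq_sym.
by rewrite hornerZ hornerXsubC subrr mulr0 mul0r.
Qed.

Lemma size_lag i : (size (lag i) <= d.+1)%N.
Proof.
rewrite /lag scaler_prod; apply: leq_trans (size_scale_leq _ _) _.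
rewrite size_prod => [|j _]; last by rewrite polyXsubC_eq0.
rewrite (eq_bigr (fun _ => 2%N)) => [|j _]; last by rewrite size_XsubC.
rewrite sum_nat_const.
have -> : #|(fun j : 'I_d.+1 => j != i)| = d by have := cardC1 i; rewrite card_ord.
by rewrite muln2 -addnn -addSn addnK.
Qed.

Lemma sum_lag : \sum_i lag i = 1.
Proof.
apply/eqP; rewrite -subr_eq0; apply/eqP.
set D := _ - _.
apply: contraTeq (leqnn (size D)) => D0; rewrite -ltnNge.
have := @max_poly_roots _ D (map th (enum 'I_d.+1)) D0.
rewrite size_map size_enum_ord map_inj_uniq ?enum_uniq // => /(_ _ isT).
have sD : (size D <= d.+1)%N.
  apply: leq_trans (size_polyD _ _) _; rewrite geq_max size_polyN size_poly1 /=.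
  rewrite andbT; apply: leq_trans (size_sum _ _ _) _.
  by apply/bigmax_leqP => j _; apply: size_lag.
move=> h; have : (d.+1 < size D)%N.
  apply: h; apply/allP => x /mapP [k _ ->].
  rewrite /root /D hornerD hornerN horner_sum hornerC.
  rewrite (bigD1 k) //= lag_th eqxx big1 ?addr0 ?subrr // => j jk.
  by rewrite lag_th (negbTE jk).
by rewrite ltnNge sD.
Qed.

Lemma sum_prim : \sum_i prim_idem A th i = 1.
Proof.
rewrite (eq_bigr (fun i => horner_mx A (lag i))) => [|i _]; last by rewrite horner_lag.
by rewrite -(big_morph (horner_mx A) (rmorphD _) (rmorph0 _)) sum_lag rmorph1.
Qed.

Lemma lagX i : ('X - (th i)%:P) * lag i =
   (\prod_(j < d.+1 | j != i) (th i - th j)^-1) *: Qp.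
Proof.
by rewrite /lag scaler_prod -scalerAr; congr (_ *: _); rewrite /Qp [RHS](bigD1 i).
Qed.

Lemma hornerAC p : horner_mx A p *m A = A *m horner_mx A p.
Proof. exact: (comm_horner_mx p (erefl (A *m A))). Qed.

Lemma prim_mulA i : prim_idem A th i *m A = th i *: prim_idem A th i.
Proof.
have h := congr1 (horner_mx A) (lagX i).
rewrite horner_mxZ hornerQ scaler0 rmorphM /= rmorphB /= horner_mx_X horner_mx_C in h.
rewrite /prim_idem -horner_lag.
have hc := hornerAC (lag i).
rewrite hc; apply/eqP; rewrite -subr_eq0 -mul_scalar_mx -mulmxBl; apply/eqP.
by rewrite -mulmxE in h.
Qed.

Lemma mulA_prim i : A *m prim_idem A th i = th i *: prim_idem A th i.
Proof.
by rewrite -prim_mulA /prim_idem -horner_lag hornerAC.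
Qed.

Lemma prim_orth (i j : 'I_d.+1) : i != j -> prim_idem A th i *m prim_idem A th j = 0.
Proof.
move=> ij; rewrite [prim_idem A th j]/prim_idem -horner_lag /lag (bigD1 i) //=.
rewrite rmorphM /= horner_mxZ rmorphB /= horner_mx_X horner_mx_C.
rewrite -mulmxE mulmxA -scalemxAr mulmxBr prim_mulA mul_mx_scalar subrr.
by rewrite scaler0 mul0mx.
Qed.

Lemma prim_rank i : (\rank (prim_idem A th i) <= 1)%N.
Proof.
have hd := mxdirect_sum_eigenspace A (P := predT) (a_ := th) (in2W thI).
move/mxdirectP: hd => /= hd.
have hle : (\sum_(j < d.+1) \rank (eigenspace A (th j)) <= d.+1)%N.
  by rewrite -hd rank_leq_col.
have hpos j : (1 <= \rank (eigenspace A (th j)))%N.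
  by rewrite lt0n mxrank_eq0; apply: thE.
have hi : (\rank (eigenspace A (th i)) <= 1)%N.
  move: hle; rewrite (bigD1 i) //=.
  have : (d <= \sum_(j < d.+1 | j != i) \rank (eigenspace A (th j)))%N.
    rewrite -[X in (X <= _)%N](_ : (\sum_(j < d.+1 | j != i) 1 = d)%N).
      by apply: leq_sum => j _; apply: hpos.
    rewrite sum_nat_const muln1.
    by have := cardC1 i; rewrite card_ord => ->.
  move: (\sum_(j < _ | _) _)%N (\rank _) => s r h1 h2.
  by rewrite -(leq_add2r s) (leq_trans h2) // add1n ltnS.
apply: leq_trans hi; apply: mxrankS; apply/eigenspaceP.
exact: prim_mulA.
Qed.

Lemma prim_idem_idem i : prim_idem A th i *m prim_idem A th i = prim_idem A th i.
Proof.
rewrite -{3}[prim_idem A th i]mulr1 -sum_prim -mulmxE mulmx_sumr (bigD1 i) //= big1 ?addr0 //.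
by move=> j ji; rewrite prim_orth // eq_sym.
Qed.

Lemma horner_prim q i : horner_mx A q *m prim_idem A th i = q.[th i] *: prim_idem A th i.
Proof.
elim/poly_ind: q => [|q c IH]; first by rewrite rmorph0 mul0mx horner0 scale0r.
rewrite rmorphD rmorphM /= horner_mx_X horner_mx_C -mulmxE mulmxDl -mulmxA mulA_prim.
by rewrite -scalemxAr IH scalerA mul_scalar_mx hornerMXaddC scalerDl mulrC.
Qed.

Lemma horner_sum q : horner_mx A q = \sum_i q.[th i] *: prim_idem A th i.
Proof.
rewrite -[LHS]mulr1 -sum_prim -mulmxE mulmx_sumr; apply: eq_bigr => i _; exact: horner_prim.
Qed.

End Idem.

Lemma sandwich (K : fieldType) n (E Y : 'M[K]_n) :
  (\rank E <= 1)%N -> E *m Y *m E = \tr (E *m Y) *: E.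
Proof.
move=> hE; case: (eqVneq E 0) => [->|E0]; first by rewrite !mul0mx scaler0.
have [k Hk] : exists k, row k E != 0.
  case: (pickP (fun k => row k E != 0)) => [k Hk|h]; first by exists k.
  by case/eqP: E0; apply/row_matrixP => k; rewrite row0; apply/eqP; exact: negbFE (h k).
set w := row k E.
have wE : (w <= E)%MS := row_sub k E.
have rw : \rank w = 1%N.
  by apply/eqP; rewrite eqn_leq rank_leq_row lt0n mxrank_eq0 Hk.
have Ew : (E <= w)%MS.
  case: (mxrank_leqif_sup wE) => _ <-.
  by rewrite eqn_leq mxrankS // rw hE.
have [D ->] := submxP Ew.
have -> : D *m w *m Y *m (D *m w) = D *m (w *m Y *m D) *m w by rewrite !mulmxA.
rewrite [w *m Y *m D]mx11_scalar mul_mx_scalar -scalemxAl.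
by rewrite -[D *m w *m Y]mulmxA mxtrace_mulC {2}[w *m Y *m D]mx11_scalar mxtrace_scalar mulr1n.
Qed.

Lemma mul_neq0 (K : fieldType) n (U V : 'M[K]_n) :
  U != 0 -> V != 0 -> exists Y, U *m Y *m V != 0.
Proof.
have ent (M : 'M[K]_n) : M != 0 -> exists ab : 'I_n * 'I_n, M ab.1 ab.2 != 0.
  move=> M0; case: (pickP (fun ab : 'I_n * 'I_n => M ab.1 ab.2 != 0)) => [ab h|h].
    by exists ab.
  by case/eqP: M0; apply/matrixP => i j; rewrite mxE; apply/eqP; exact: negbFE (h (i, j)).
move=> /ent [[a b] /= Uab] /ent [[c e] /= Vce].
exists (delta_mx b c); apply/eqP => /matrixP /(_ a e); rewrite !mxE.
rewrite (bigD1 c) //= big1 => [|l lc]; last first.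
  rewrite mxE big1 ?mul0r // => m _; rewrite mxE (negbTE lc) andbF mulr0 //.
rewrite mxE (bigD1 b) //= big1 => [|m mb]; last by rewrite mxE (negbTE mb) mulr0.
rewrite mxE !eqxx mulr1 !addr0 => /eqP; rewrite mulf_eq0 (negbTE Uab) (negbTE Vce) //.
Qed.

Section Chain.
Variables (K : fieldType) (d : nat) (A : 'M[K]_d.+1) (Es : 'I_d.+1 -> 'M[K]_d.+1).
Local Notation F k := (Es (inord k)).
Hypothesis Fo : forall k l, (k <= d)%N -> (l <= d)%N -> k != l -> F k *m F l = 0.
Hypothesis Fi : forall k, (k <= d)%N -> F k *m F k = F k.
Hypothesis Fs : forall k Y, (k <= d)%N -> F k *m Y *m F k = \tr (F k *m Y) *: F k.
Hypothesis Ffar : forall k l, (k <= d)%N -> (l <= d)%N -> ((k.+1 < l) || (l.+1 < k))%N ->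
  F k *m A *m F l = 0.
Hypothesis Fsum : \sum_(l < d.+1) F l = 1.

Local Notation a := (ls_a A Es).
Local Notation x := (ls_x A Es).

Fixpoint W k := if k is k'.+1 then F k *m A *m W k' else F 0.
Fixpoint Wl k := if k is k'.+1 then Wl k' *m A *m F k else F 0.
Definition Wm k := if k is k'.+1 then W k' else 0.
Definition Wlm k := if k is k'.+1 then Wl k' else 0.

Lemma W_F k : (k <= d)%N -> F k *m W k = W k.
Proof. by case: k => [|k] hk /=; rewrite ?Fi // !mulmxA Fi. Qed.

Lemma Wl_F k : (k <= d)%N -> Wl k *m F k = Wl k.
Proof. by case: k => [|k] hk /=; rewrite ?Fi // -!mulmxA Fi. Qed.

Lemma xC k : (k < d)%N -> x k.+1 = \tr (F k *m A *m F k.+1 *m A).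
Proof. by move=> hk; rewrite /ls_x -mulmxA mxtrace_mulC !mulmxA. Qed.

Lemma sum_delta (V : 'M[K]_d.+1) c : (c <= d)%N ->
  \sum_(l < d.+1) (l == c :> nat)%:R *: V = V.
Proof.
move=> hc; rewrite (bigD1 (Ordinal (hc : (c < d.+1)%N))) //= eqxx scale1r.
by rewrite big1 ?addr0 // => l hl; rewrite (_ : (l == c :> nat) = false) ?scale0r //;
  apply: contraNF hl => /eqP h; apply/eqP/val_inj.
Qed.

Lemma term_W k (l : 'I_d.+1) : (k < d)%N ->
  F l *m A *m F k *m W k =
  (l == k.+1 :> nat)%:R *: W k.+1 + (l == k :> nat)%:R *: (a k *: W k)
  + (l.+1 == k)%:R *: (x k *: Wm k).
Proof.
move=> hk; have hl : (l <= d)%N by rewrite -ltnS.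
have hk' : (k <= d)%N by apply: ltnW.
have T1 : (true%:R : K) = 1 by [].
have T0 : (false%:R : K) = 0 by [].
case: (eqVneq (l : nat) k.+1) => [e|n1].
  rewrite e (gtn_eqF (ltnSn k)) (gtn_eqF (ltnW (ltnSn k.+1))) T1 T0.
  by rewrite -mulmxA W_F // scale1r !scale0r !addr0.
case: (eqVneq (l : nat) k) => [e|n2].
  rewrite e (gtn_eqF (ltnSn k)) T1 T0.
  rewrite -mulmxA W_F // -{1}(W_F hk') mulmxA Fs // scale1r !scale0r add0r addr0.
  by rewrite -scalemxAl W_F.
case: (eqVneq l.+1 k) => [e|n3].
  rewrite T1 T0 scale1r !scale0r !add0r.
  rewrite -e in hk hk' *.
  have hl' : (l <= d)%N by apply: ltnW.
  rewrite -mulmxA W_F // [W l.+1]/= -(W_F hl').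
  have -> : F l *m A *m (F l.+1 *m A *m (F l *m W l)) =
     F l *m (A *m F l.+1 *m A) *m F l *m W l by rewrite !mulmxA.
  by rewrite Fs // -scalemxAl W_F // xC // !mulmxA.
rewrite T0 !scale0r !addr0 Ffar ?mul0mx //.
move: n1 n2 n3; case: (ltngtP l k) => // h n1 _ n3.
  by rewrite ltn_neqAle n3 h.
by rewrite orbC ltn_neqAle eq_sym n1 h.
Qed.

Lemma term_Wl k (l : 'I_d.+1) : (k < d)%N ->
  Wl k *m F k *m A *m F l =
  (l == k.+1 :> nat)%:R *: Wl k.+1 + (l == k :> nat)%:R *: (a k *: Wl k)
  + (l.+1 == k)%:R *: (x k *: Wlm k).
Proof.
move=> hk; have hl : (l <= d)%N by rewrite -ltnS.
have hk' : (k <= d)%N by apply: ltnW.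
have T1 : (true%:R : K) = 1 by [].
have T0 : (false%:R : K) = 0 by [].
case: (eqVneq (l : nat) k.+1) => [e|n1].
  rewrite e (gtn_eqF (ltnSn k)) (gtn_eqF (ltnW (ltnSn k.+1))) T1 T0.
  by rewrite Wl_F // scale1r !scale0r !addr0.
case: (eqVneq (l : nat) k) => [e|n2].
  rewrite e (gtn_eqF (ltnSn k)) T1 T0 scale1r !scale0r add0r addr0.
  have -> : Wl k *m F k *m A *m F k = Wl k *m (F k *m A *m F k) by rewrite !mulmxA.
  by rewrite Fs // -scalemxAr Wl_F.
case: (eqVneq l.+1 k) => [e|n3].
  rewrite T1 T0 scale1r !scale0r !add0r.
  rewrite -e in hk hk' *.
  have hl' : (l <= d)%N by apply: ltnW.
  rewrite Wl_F // [Wl l.+1]/= -(Wl_F hl').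
  have -> : Wl l *m F l *m A *m F l.+1 *m A *m F l =
     Wl l *m (F l *m (A *m F l.+1 *m A) *m F l) by rewrite !mulmxA.
  by rewrite Fs // -scalemxAr Wl_F // xC // !mulmxA.
rewrite T0 !scale0r !addr0.
have -> : Wl k *m F k *m A *m F l = Wl k *m (F k *m A *m F l) by rewrite !mulmxA.
rewrite Ffar ?mulmx0 //.
move: n1 n2 n3; case: (ltngtP l k) => // h n1 _ n3.
  by rewrite orbC ltn_neqAle n3 h.
by rewrite ltn_neqAle eq_sym n1 h.
Qed.

Lemma sum_delta1 (V : 'M[K]_d.+1) k : (k <= d.+1)%N -> (k = 0%N -> V = 0) ->
  \sum_(l < d.+1) (l.+1 == k)%:R *: V = V.
Proof.
case: k => [_ /(_ erefl) V0|k hk _]; first by rewrite V0; apply: big1 => l _; rewrite scaler0.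
by rewrite (eq_bigr (fun l : 'I_d.+1 => (l == k :> nat)%:R *: V)) ?sum_delta.
Qed.

Lemma A_W k : (k < d)%N -> A *m W k = W k.+1 + a k *: W k + x k *: Wm k.
Proof.
move=> hk; have hk' : (k <= d)%N by apply: ltnW.
have -> : A *m W k = (\sum_(l < d.+1) F l) *m A *m F k *m W k.
  by rewrite Fsum mul1mx -mulmxA W_F.
rewrite !mulmx_suml (eq_bigr _ (fun l _ => term_W l hk)) !big_split /=.
rewrite !sum_delta // sum_delta1 //; first by apply: leqW.
by move=> k0; rewrite k0 scaler0.
Qed.

Lemma Wl_A k : (k < d)%N -> Wl k *m A = Wl k.+1 + a k *: Wl k + x k *: Wlm k.
Proof.
move=> hk; have hk' : (k <= d)%N by apply: ltnW.
have -> : Wl k *m A = Wl k *m F k *m A *m (\sum_(l < d.+1) F l).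
  by rewrite Fsum mulmx1 Wl_F.
rewrite !mulmx_sumr (eq_bigr _ (fun l _ => term_Wl l hk)) !big_split /=.
rewrite !sum_delta // sum_delta1 //; first by apply: leqW.
by move=> k0; rewrite k0 scaler0.
Qed.

Lemma hornerW k : (k <= d)%N ->
  horner_mx A (ls_ppair A Es k).2 *m F 0 = W k /\
  horner_mx A (ls_ppair A Es k).1 *m F 0 = Wm k.
Proof.
elim: k => [|k IH] hk; first by rewrite /= rmorph1 rmorph0 mul1mx mul0mx.
have [h2 h1] := IH (ltnW hk); split; last by [].
rewrite /= rmorphB /= !rmorphM /= rmorphB /= horner_mx_X !horner_mx_C.
rewrite -[RHS]/(W k.+1) -!mulmxE mulmxBl -!mulmxA h2 h1 mulmxBl !mul_scalar_mx A_W //.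
by rewrite addrAC addrK addrK.
Qed.

Lemma hornerWl k : (k <= d)%N ->
  F 0 *m horner_mx A (ls_ppair A Es k).2 = Wl k /\
  F 0 *m horner_mx A (ls_ppair A Es k).1 = Wlm k.
Proof.
elim: k => [|k IH] hk; first by rewrite /= rmorph1 rmorph0 mulmx1 mulmx0.
have [h2 h1] := IH (ltnW hk); split; last by [].
rewrite /= [('X - _) * _]mulrC [_%:P * _]mulrC.
rewrite rmorphB /= !rmorphM /= rmorphB /= horner_mx_X !horner_mx_C.
rewrite -[RHS]/(Wl k.+1) -!mulmxE mulmxBr !mulmxA h2 h1 mulmxBr !mul_mx_scalar Wl_A //.
by rewrite addrAC addrK addrK.
Qed.

Lemma WlW_neq i j : (i <= d)%N -> (j <= d)%N -> i != j -> Wl i *m W j = 0.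
Proof.
move=> hi hj ij; rewrite -(Wl_F hi) -(W_F hj).
by rewrite -mulmxA (mulmxA (F i)) Fo // mul0mx mulmx0.
Qed.

Lemma WlW_eq i : (i <= d)%N -> Wl i *m W i = (\prod_(1 <= k < i.+1) x k) *: F 0.
Proof.
elim: i => [|i IH] hi; first by rewrite /= Fi // big_geq // scale1r.
have hi' : (i <= d)%N by apply: ltnW.
rewrite big_nat_recr //= -(Wl_F hi') -(W_F hi').
have -> : Wl i *m F i *m A *m F i.+1 *m (F i.+1 *m A *m (F i *m W i)) =
  Wl i *m (F i *m (A *m (F i.+1 *m F i.+1) *m A) *m F i) *m W i by rewrite !mulmxA.
rewrite Fi // Fs // -scalemxAr -scalemxAl Wl_F // IH // scalerA.
congr (_ *: _); rewrite mulrC; congr (_ * _).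
by have := xC hi; rewrite /ls_x => ->; rewrite !mulmxA.
Qed.

Hypothesis F0n : F 0 != 0.
Hypothesis Fadj : forall k, (0 < k <= d)%N ->
  F k *m A *m F k.-1 != 0 /\ F k.-1 *m A *m F k != 0.

Lemma trF0 : \tr (F 0) = 1.
Proof.
have := Fs 1 (leq0n d); rewrite mulmx1 Fi // => h.
have : (1 - \tr (F 0)) *: F 0 = 0 by rewrite scalerBl scale1r -h subrr.
move/eqP; rewrite scaler_eq0 (negbTE F0n) orbF subr_eq0 eq_sym.
by move/eqP.
Qed.

Lemma orth_tr i j : (i <= d)%N -> (j <= d)%N ->
  \tr (horner_mx A (ls_p A Es i * ls_p A Es j) *m F 0) =
  (i == j)%:R * \prod_(1 <= k < i.+1) x k.
Proof.
move=> hi hj.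
rewrite rmorphM -mulmxE -[X in \tr (_ *m X)](Fi (leq0n d)) mulmxA mxtrace_mulC.
rewrite !mulmxA -mulmxA /ls_p (hornerWl hi).1 (hornerW hj).1.
case: (eqVneq i j) => [<-|ij]; last by rewrite WlW_neq // mxtrace0 mul0r.
by rewrite WlW_eq // mxtraceZ trF0 mulr1 mul1r.
Qed.

Lemma x_neq0 k : (0 < k <= d)%N -> x k != 0.
Proof.
case: k => // k hk; have [U0 V0] := Fadj hk.
have [Y] := mul_neq0 U0 V0; apply: contraNneq => x0; rewrite /=.
have hk1 : (k.+1 <= d)%N by case/andP: hk.
have hk0 : (k <= d)%N by apply: ltnW.
have -> : F k.+1 *m A *m F k *m Y *m (F k *m A *m F k.+1) =
   F k.+1 *m A *m (F k *m Y *m F k) *m A *m F k.+1 by rewrite !mulmxA.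
rewrite Fs // -scalemxAr -!scalemxAl.
have -> : F k.+1 *m A *m F k *m A *m F k.+1 = F k.+1 *m (A *m F k *m A) *m F k.+1
  by rewrite !mulmxA.
rewrite Fs // !mulmxA.
by rewrite /ls_x in x0; rewrite x0 !scale0r scaler0.
Qed.

End Chain.

Lemma dual_orth (K : fieldType) n (P : 'I_n -> 'I_n -> K) (m X : 'I_n -> K) :
  (forall i, X i != 0) ->
  (forall i j, \sum_r P i r * P j r * m r = (i == j)%:R * X i) ->
  forall r s, \sum_i P i r * P i s / X i = (r == s)%:R * (m r)^-1.
Proof.
move=> X0 H.
pose U : 'M[K]_n := \matrix_(i, r) (P i r * m r).
pose V : 'M[K]_n := \matrix_(r, j) (P j r / X j).
have UV : U *m V = 1%:M.
  apply/matrixP => i j; rewrite !mxE.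
  rewrite (eq_bigr (fun r => P i r * P j r * m r / X j)); last first.
    by move=> r _; rewrite !mxE; rewrite -!mulrA; congr (_ * _); rewrite mulrCA.
  rewrite -mulr_suml H; case: (eqVneq i j) => [->|ij]; last by rewrite mul0r mul0r.
  by rewrite mul1r divff.
have VU := mulmx1C UV.
have key r s : (\sum_i P i r * P i s / X i) * m s = (r == s)%:R.
  move/matrixP: VU => /(_ r s); rewrite !mxE => <-.
  rewrite mulr_suml; apply: eq_bigr => i _; rewrite !mxE.
  by rewrite -!mulrA; congr (_ * _); rewrite mulrCA.
move=> r s.
have ms : m s != 0.
  by apply/eqP => m0; have := key s s; rewrite m0 mulr0 eqxx => /esym/eqP; rewrite oner_eq0.
have -> : \sum_i P i r * P i s / X i = (r == s)%:R / m s.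
  by rewrite -(key r s) mulfK.
by case: (eqVneq r s) => [->|_]; rewrite ?mul0r ?mul1r.
Qed.

Unset Implicit Arguments.

Theorem theorem18p4 (K : fieldType) (d : nat) (A As : 'M[K]_d.+1)
  (E Es : 'I_d.+1 -> 'M[K]_d.+1) (th : 'I_d.+1 -> K) :
  leonard_system A As E Es ->
  injective th -> (forall i, eigenvalue A (th i)) ->
  (forall i, E i = prim_idem A th i) ->
  (forall i j : 'I_d.+1,
     \sum_(r < d.+1) (ls_p A Es i).[th r] * (ls_p A Es j).[th r] * ls_m E Es r
     = (i == j)%:R * \prod_(1 <= k < i.+1) ls_x A Es k) /\
  (forall r s : 'I_d.+1,
     \sum_(i < d.+1) (ls_p A Es i).[th r] * (ls_p A Es i).[th s]
                      / \prod_(1 <= k < i.+1) ls_x A Es k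
     = (r == s)%:R * (ls_m E Es r)^-1).
Proof.
move=> [_ [_ [_ [[th2 [th2I th2E EsE]] [_ [_ [Efar Eadj]]]]]]] thI thE EE.
have inj k l : (k <= d)%N -> (l <= d)%N -> k != l -> (inord k : 'I_d.+1) != inord l.
  move=> hk hl; apply: contra => /eqP h.
  by move: (congr1 val h); rewrite /= !inordK // => ->.
have Fo : forall k l, (k <= d)%N -> (l <= d)%N -> k != l ->
    Es (inord k) *m Es (inord l) = 0.
  by move=> k l hk hl kl; rewrite !EsE prim_orth //; apply: inj.
have Fi : forall k, (k <= d)%N -> Es (inord k) *m Es (inord k) = Es (inord k).
  by move=> k _; rewrite EsE prim_idem_idem.
have Fs : forall k Y, (k <= d)%N ->
    Es (inord k) *m Y *m Es (inord k) = \tr (Es (inord k) *m Y) *: Es (inord k).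
  by move=> k Y _; apply: sandwich; rewrite EsE prim_rank.
have Ffar : forall k l, (k <= d)%N -> (l <= d)%N -> ((k.+1 < l) || (l.+1 < k))%N ->
    Es (inord k) *m A *m Es (inord l) = 0.
  by move=> k l hk hl h; apply: Efar; rewrite /far !inordK.
have Fsum : \sum_(l < d.+1) Es (inord l) = 1.
  rewrite (eq_bigr (fun l => Es l)) => [|l _]; last by rewrite inord_val.
  by rewrite (eq_bigr (fun l => prim_idem As th2 l)) ?sum_prim.
have F0n : Es (inord 0) != 0.
  case: (posnP d) => [d0|dpos].
    have := Fsum; rewrite big_ord_recl big1 ?addr0 => [h|[l hl] _]; last by exfalso; move: hl; rewrite d0.
    by rewrite /= in h; rewrite h oner_neq0.
  have := Eadj (inord 0) (inord 1).
  rewrite /adj !inordK // eqxx /= => /(_ isT).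
  by apply: contraNneq => ->; rewrite !mul0mx.
have Fadj : forall k, (0 < k <= d)%N ->
    Es (inord k) *m A *m Es (inord k.-1) != 0 /\ Es (inord k.-1) *m A *m Es (inord k) != 0.
  case=> // k /andP [_ hk]; split; apply: Eadj;
    by rewrite /adj !inordK //= ?eqxx ?orbT //; apply: ltnW.
have i0 : (inord 0 : 'I_d.+1) = ord0 by apply: val_inj; rewrite /= inordK.
have P1 : forall i j : 'I_d.+1,
     \sum_(r < d.+1) (ls_p A Es i).[th r] * (ls_p A Es j).[th r] * ls_m E Es r
     = (i == j)%:R * \prod_(1 <= k < i.+1) ls_x A Es k.
  move=> i j.
  have -> : (i == j) = (i == j :> nat) by [].
  rewrite -(orth_tr Fo Fi Fs Ffar Fsum F0n (ltnSE (ltn_ord i)) (ltnSE (ltn_ord j))).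
  rewrite (horner_sum thI thE) mulmx_suml (big_morph _ (@mxtraceD _ _) (mxtrace0 _ _)); apply: eq_bigr => r _.
  by rewrite -scalemxAl mxtraceZ hornerM /ls_m EE i0.
split; first exact: P1.
apply: (dual_orth (P := fun i r => (ls_p A Es i).[th r])) => // i.
rewrite prodf_seq_neq0; apply/allP => k; rewrite mem_index_iota => hk.
apply: (x_neq0 Fs Fadj); case/andP: hk => h1 h2.
by rewrite h1 -ltnS (leq_trans h2) // ltn_ord.
Qed.
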